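(* Let $\mathbb{F}\in\{\mathbb{R},\mathbb{C}\}$, let $m\le n\le 2m$, and let $\ell$ be an integer with $n-m\le\ell\le\lfloor n/2\rfloor$. Let $X_{11}$, $X_{22}$, $Y$ be nonsingular matrices over $\mathbb{F}$ of sizes $(n-\ell)\times(n-\ell)$, $(m+\ell-n)\times(m+\ell-n)$ and $\ell\times\ell$ respectively, and let $X_{12}$ be an arbitrary $(n-\ell)\times(m+\ell-n)$ matrix over $\mathbb{F}$. Define the $m\times n$ matrices $$A=\begin{pmatrix}X_{11}&X_{12}&O\\ O&X_{22}&O\end{pmatrix},\qquad B=\begin{pmatrix}O&Y\\ O&O\end{pmatrix},$$ where in $A$ the row blocks have sizes $n-\ell$, $m+\ell-n$ and the column blocks have sizes $n-\ell$, $m+\ell-n$, $n-m$, and in $B$ the row blocks have sizes $\ell$, $m-\ell$ and the column blocks have sizes $n-\ell$, $\ell$. Then $\mathrm{rank}_{\mathbb{F}}(A;B)=m+\ell$.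
   Context: $(A;B)$ denotes the $m\times n\times 2$ tensor with slices $A,B$. A rank-one such tensor has the form $(\alpha\,\mathbf{a}\mathbf{b}^T;\beta\,\mathbf{a}\mathbf{b}^T)$ with nonzero $\mathbf{a}\in\mathbb{F}^m$, $\mathbf{b}\in\mathbb{F}^n$, $(\alpha,\beta)\ne0$; $\mathrm{rank}_{\mathbb{F}}$ is the minimal number of rank-one tensors over $\mathbb{F}$ summing slicewise to the tensor. *)

(* Defs.v *)
From HB Require Import structures.
From mathcomp Require Import all_boot all_order all_algebra.
Set Implicit Arguments. Unset Strict Implicit. Unset Printing Implicit Defensive.
Import Order.TTheory GRing.Theory Num.Theory.
Local Open Scope ring_scope.

(* Entry (i,j) of X, with natural-number indices; 0 outside the matrix. *)
Definition mxget (R : nmodType) (p q : nat) (X : 'M[R]_(p, q)) (i j : nat) : R :=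
  match @insub nat (fun k => k < p)%N _ i, @insub nat (fun k => k < q)%N _ j with
  | Some i', Some j' => X i' j'
  | _, _ => 0
  end.

(* A sum of r rank-one tensors (alpha a b^T ; beta a b^T) equals (A;B). *)
Definition tensor_rank_le (F : fieldType) (m n : nat) (A B : 'M[F]_(m, n)) (r : nat) : Prop :=
  exists (a : 'I_r -> 'cV[F]_m) (b : 'I_r -> 'cV[F]_n) (al be : 'I_r -> F),
    (forall k, [/\ a k != 0, b k != 0 & (al k != 0) || (be k != 0)]) /\
    A = \sum_(k < r) al k *: (a k *m (b k)^T) /\
    B = \sum_(k < r) be k *: (a k *m (b k)^T).

Definition tensor_rank_eq (F : fieldType) (m n : nat) (A B : 'M[F]_(m, n)) (r : nat) : Prop :=
  tensor_rank_le A B r /\ forall r', tensor_rank_le A B r' -> (r <= r')%N.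

Definition matA (F : fieldType) (m n l : nat)
  (X11 : 'M[F]_(n - l)) (X12 : 'M[F]_(n - l, m + l - n)) (X22 : 'M[F]_(m + l - n))
  : 'M[F]_(m, n) :=
  \matrix_(i < m, j < n)
    if (i < n - l)%N then
      (if (j < n - l)%N then mxget X11 i j
       else if (j < m)%N then mxget X12 i (j - (n - l)) else 0)
    else
      (if ((n - l <= j) && (j < m))%N then mxget X22 (i - (n - l)) (j - (n - l)) else 0).

Definition matB (F : fieldType) (m n l : nat) (Y : 'M[F]_l) : 'M[F]_(m, n) :=
  \matrix_(i < m, j < n)
    if ((i < l) && (n - l <= j))%N then mxget Y i (j - (n - l)) else 0.

Definition thm7_prop (F : fieldType) : Prop :=
  forall (m n l : nat), (m <= n)%N -> (n <= 2 * m)%N ->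
  (n - m <= l)%N -> (l <= n./2)%N ->
  forall (X11 : 'M[F]_(n - l)) (X12 : 'M[F]_(n - l, m + l - n))
         (X22 : 'M[F]_(m + l - n)) (Y : 'M[F]_l),
  X11 \in unitmx -> X22 \in unitmx -> Y \in unitmx ->
  tensor_rank_eq (@matA F m n l X11 X12 X22) (@matB F m n l Y) (m + l).

(* Main.v *)
Require Import Defs.
From HB Require Import structures.
From mathcomp Require Import all_boot all_order all_algebra.
Set Implicit Arguments. Unset Strict Implicit. Unset Printing Implicit Defensive.
Import Order.TTheory GRing.Theory Num.Theory.
Local Open Scope ring_scope.

From Stdlib Require Import Lia.
Ltac nlia := intros; repeat match goal with H : is_true (_ <= _)%N |- _ => apply (elimT ssrnat.leP) in H end;
  try apply/ssrnat.leP; repeat (rewrite -?plusE -?minusE -?multE);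
  repeat match goal with H : context [addn] |- _ => rewrite -plusE in H
   | H : context [subn] |- _ => rewrite -minusE in H
   | H : context [muln] |- _ => rewrite -multE in H end; lia.
Ltac nfalse := apply/negbTE; rewrite -?leqNgt; nlia.

Section Gen.
Variable F : fieldType.

Lemma mulmx_colrow m R n (U : 'M[F]_(m,R)) (X : 'M_(R,n)) :
  U *m X = \sum_k col k U *m row k X.
Proof.
apply/matrixP=> i j; rewrite !mxE summxE; apply: eq_bigr => k _.
by rewrite !mxE big_ord1 !mxE.
Qed.

Lemma sum_rank1E m n R (a : 'I_R -> 'cV[F]_m) (c : 'I_R -> F) (v : 'I_R -> 'rV[F]_n) :
  \sum_k c k *: (a k *m v k) = (\matrix_(i, k) a k i 0) *m \matrix_k (c k *: v k).
Proof.
rewrite mulmx_colrow; apply: eq_bigr => k _; rewrite rowK -scalemxAr; congr (_ *: (_ *m _)).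
by apply/matrixP=> i j; rewrite !mxE (ord1 j).
Qed.

Lemma subst_bound m n R p (A B : 'M[F]_(m,n)) (a : 'I_R -> 'cV[F]_m) (b : 'I_R -> 'cV[F]_n)
  (al be : 'I_R -> F) (C : 'M_(n,p)) :
  A = \sum_k al k *: (a k *m (b k)^T) ->
  B = \sum_k be k *: (a k *m (b k)^T) ->
  \rank (A *m C) = p ->
  exists Yx : 'M_(p,n),
   (\rank (row_mx (A - A *m C *m Yx) (B - B *m C *m Yx)) + p <= R)%N.
Proof.
move=> hA hB rkAC.
pose W : 'M_(R,p) := \matrix_k ((b k)^T *m C).
pose U0 : 'M_(m,R) := \matrix_(i, k) a k i 0.
have hAC : A *m C = U0 *m \matrix_k (al k *: ((b k)^T *m C)).
  rewrite -sum_rank1E hA mulmx_suml; apply: eq_bigr => k _.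
  by rewrite -scalemxAl mulmxA.
have hD : \matrix_k (al k *: ((b k)^T *m C)) = diag_mx (\row_k al k) *m W.
  apply/matrixP=> i j; rewrite mul_diag_mx !mxE.
  by [].
have rW : row_full W.
  rewrite /row_full eqn_leq rank_leq_col -{1}rkAC hAC hD.
  exact: leq_trans (mxrankM_maxr _ _) (mxrankM_maxr _ _).
pose K := fullrankfun rW.
pose S := rowsub K W.
have uS : S \in unitmx by apply: fullrowsub_unit.
pose Bm : 'M_(R,n) := \matrix_k (b k)^T.
pose Yx := invmx S *m rowsub K Bm.
exists Yx.
pose bp k := (b k)^T - (b k)^T *m C *m Yx.
have bpK i : bp (K i) = 0.
  rewrite /bp /Yx.
  have -> : (b (K i))^T *m C = row i S by rewrite /S row_rowsub rowK.
  rewrite !mulmxA -row_mul mulmxV // -row_mul mul1mx row_rowsub rowK.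
  by rewrite subrr.
have eA : A - A *m C *m Yx = U0 *m \matrix_k (al k *: bp k).
  rewrite -sum_rank1E hA mulmx_suml mulmx_suml -sumrB; apply: eq_bigr => k _.
  by rewrite /bp -!scalemxAl mulmxBr -scalerBr !mulmxA.
have eB : B - B *m C *m Yx = U0 *m \matrix_k (be k *: bp k).
  rewrite -sum_rank1E hB mulmx_suml mulmx_suml -sumrB; apply: eq_bigr => k _.
  by rewrite /bp -!scalemxAl mulmxBr -scalerBr !mulmxA.
rewrite eA eB -mul_mx_row.
set Z := row_mx _ _.
pose E : 'M[F]_(p,R) := rowsub K (1%:M : 'M[F]_R).
have EZ : E *m Z = 0.
  apply/row_matrixP => i; rewrite row0 row_mul /E row_rowsub row1 -rowE.
  rewrite /Z row_row_mx !rowK bpK !scaler0.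
  by rewrite row_mx0.
have rE : \rank E = p.
  apply/eqP; rewrite eqn_leq rank_leq_row.
  have hS : \rank S = p by rewrite mxrank_unit.
  by rewrite -[X in (X <= _)%N]hS /S rowsubE; apply: mxrankM_maxl.
have : (Z^T <= kermx E^T)%MS by apply/sub_kermxP; rewrite -trmx_mul EZ trmx0.
move/mxrankS; rewrite mxrank_ker mxrank_tr mxrank_tr rE => h.
rewrite -(leq_add2r p) in h.
apply: leq_trans (leq_add (mxrankM_maxr _ _) (leqnn p)) _.
apply: leq_trans h _.
rewrite subnK //.
by rewrite -rE rank_leq_col.
Qed.

Lemma mxgetE p q (X : 'M[F]_(p,q)) i j (hi : (i < p)%N) (hj : (j < q)%N) :
  mxget X i j = X (Ordinal hi) (Ordinal hj).
Proof.
rewrite /mxget; case: insubP => [i' _ ei|]; last by rewrite hi.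
case: insubP => [j' _ ej|]; last by rewrite hj.
by congr (X _ _); apply: val_inj.
Qed.

Lemma mxget_outl p q (X : 'M[F]_(p,q)) i j : (p <= i)%N -> mxget X i j = 0.
Proof. by move=> h; rewrite /mxget insubF // ltnNge h. Qed.

Lemma mxget_outr p q (X : 'M[F]_(p,q)) i j : (q <= j)%N -> mxget X i j = 0.
Proof.
move=> h; rewrite /mxget; case: insub => // i'.
by case: insubP => // j' hj'; move: hj'; rewrite ltnNge h.
Qed.

Lemma mxget_ord p q (X : 'M[F]_(p,q)) (i : 'I_p) (j : 'I_q) : mxget X i j = X i j.
Proof. by rewrite mxgetE; congr (X _ _); apply: val_inj. Qed.

Definition selL k p (f : nat -> nat) : 'M[F]_(k,p) := \matrix_(i, r) ((r : nat) == f i)%:R.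
Definition selR q k (g : nat -> nat) : 'M[F]_(q,k) := \matrix_(c, j) ((c : nat) == g j)%:R.

Lemma mul_selL k p q f (X : 'M[F]_(p,q)) i j : (selL k p f *m X) i j = mxget X (f i) j.
Proof.
rewrite mxE; case: (ltnP (f i) p) => h.
  rewrite (bigD1 (Ordinal h)) //= big1 ?addr0.
    by rewrite !mxE eqxx mul1r (mxgetE _ h (ltn_ord j)); congr (X _ _); apply: val_inj.
  by move=> r /eqP hr; rewrite !mxE; case: eqP => [e|_]; [case: hr; apply: val_inj | rewrite ?mul0r ?mulr0].
rewrite mxget_outl // big1 // => r _; rewrite !mxE; case: eqP => [e|]; last by rewrite mul0r.
by move: (ltn_ord r); rewrite e ltnNge h.
Qed.

Lemma mul_selR p q k g (X : 'M[F]_(p,q)) i j : (X *m selR q k g) i j = mxget X i (g j).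
Proof.
rewrite mxE; case: (ltnP (g j) q) => h.
  rewrite (bigD1 (Ordinal h)) //= big1 ?addr0.
    by rewrite !mxE eqxx mulr1 (mxgetE _ (ltn_ord i) h); congr (X _ _); apply: val_inj.
  by move=> r /eqP hr; rewrite !mxE; case: eqP => [e|_]; [case: hr; apply: val_inj | rewrite ?mul0r ?mulr0].
rewrite mxget_outr // big1 // => r _; rewrite !mxE; case: eqP => [e|]; last by rewrite mulr0.
by move: (ltn_ord r); rewrite e ltnNge h.
Qed.

Lemma mul_selLR k p q k' f g (X : 'M[F]_(p,q)) i j :
  (selL k p f *m X *m selR q k' g) i j = mxget X (f i) (g j).
Proof.
rewrite mul_selR; case: (ltnP (g j) q) => h.
  by rewrite (mxgetE _ (ltn_ord i) h) mul_selL.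
by rewrite !mxget_outr.
Qed.

Lemma mxget_row_mxl m n1 n2 (P : 'M[F]_(m,n1)) (Q : 'M_(m,n2)) r c :
  (c < n1)%N -> mxget (row_mx P Q) r c = mxget P r c.
Proof.
move=> hc; case: (ltnP r m) => hr; last by rewrite !mxget_outl.
have hc' : (c < n1 + n2)%N by rewrite ltn_addr.
rewrite (mxgetE _ hr hc') (mxgetE _ hr hc).
have -> : Ordinal hc' = lshift n2 (Ordinal hc) by apply: val_inj.
by rewrite row_mxEl.
Qed.

Lemma mxget_row_mxr m n1 n2 (P : 'M[F]_(m,n1)) (Q : 'M_(m,n2)) r c :
  mxget (row_mx P Q) r (n1 + c) = mxget Q r c.
Proof.
case: (ltnP r m) => hr; last by rewrite !mxget_outl.
case: (ltnP c n2) => hc; last by rewrite !mxget_outr // leq_add2l.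
have hc' : (n1 + c < n1 + n2)%N by rewrite ltn_add2l.
rewrite (mxgetE _ hr hc') (mxgetE _ hr hc).
have -> : Ordinal hc' = rshift n1 (Ordinal hc) by apply: val_inj.
by rewrite row_mxEr.
Qed.

Lemma lower_bound m n l (X11 : 'M[F]_(n - l)) (X12 : 'M[F]_(n - l, m + l - n))
  (X22 : 'M[F]_(m + l - n)) (Y : 'M[F]_l) R (a : 'I_R -> 'cV[F]_m) (b : 'I_R -> 'cV[F]_n)
  (al be : 'I_R -> F) :
  (m <= n)%N -> (n <= m + l)%N -> (l + l <= n)%N ->
  X11 \in unitmx -> X22 \in unitmx -> Y \in unitmx ->
  matA X11 X12 X22 = \sum_k al k *: (a k *m (b k)^T) ->
  matB m n Y = \sum_k be k *: (a k *m (b k)^T) ->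
  (m + l <= R)%N.
Proof.
move=> h1 h2 h3 u11 u22 uY hA hB.
set A := matA X11 X12 X22 in hA *.
set B := matB m n Y in hB *.
pose C := selR n (n - l) id.
have hAC : \rank (A *m C) = (n - l)%N.
  have e : X11 = selL (n - l) m id *m (A *m C).
    apply/matrixP => i j; rewrite mul_selL /=.
    have hi : (i < m)%N by apply: leq_trans (ltn_ord i) _; nlia.
    have hj : (j < n)%N by apply: leq_trans (ltn_ord j) _; nlia.
    rewrite (mxgetE _ hi (ltn_ord j)) mul_selR /= (mxgetE _ hi hj) mxE /= !ltn_ord.
    by rewrite mxget_ord.
  apply/eqP; rewrite eqn_leq rank_leq_col -{1}(mxrank_unit u11) e.
  exact: mxrankM_maxr.
have hBC : B *m C = 0.
  apply/matrixP => i j; rewrite mul_selR /= mxE.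
  have hj : (j < n)%N by apply: leq_trans (ltn_ord j) _; nlia.
  rewrite (mxgetE _ (ltn_ord i) hj) mxE /=.
  have -> : (n - l <= j)%N = false by rewrite leqNgt ltn_ord.
  by rewrite andbF.
have [Yx hY] := subst_bound hA hB hAC.
rewrite hBC mul0mx subr0 in hY.
set N := row_mx _ _ in hY.
pose q := (m + l - n)%N.
pose Z : 'M[F]_(l, q) := \matrix_(i, j) mxget N i (j + (n - l)).
pose Sub : 'M[F]_(l + q) := block_mx Y Z 0 X22.
pose ri i := if (i < l)%N then i else (i - l + (n - l))%N.
pose ci j := if (j < l)%N then (n + (n - l + j))%N else (j - l + (n - l))%N.
have hSub : Sub = selL (l + q) m ri *m N *m selR (n + n) (l + q) ci.
  apply/matrixP => i j; rewrite mul_selLR.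
  case: (split_ordP i) => i' ->; case: (split_ordP j) => j' ->.
  - rewrite block_mxEul /ri /ci /= !ltn_ord mxget_row_mxr.
    have hi : (i' < m)%N by apply: leq_trans (ltn_ord i') _; nlia.
    have hj : (n - l + j' < n)%N by have := ltn_ord j'; nlia.
    rewrite (mxgetE _ hi hj) mxE /= ltn_ord leq_addr addKn.
    by rewrite mxget_ord.
  - rewrite block_mxEur /ri /ci /= ltn_ord.
    have -> : (l + j' < l)%N = false by nfalse.
    by rewrite addKn mxE.
  - rewrite block_mxEdl /ri /ci /= ltn_ord mxE mxget_row_mxr.
    have -> : (l + i' < l)%N = false by nfalse.
    rewrite addKn.
    have hi : (i' + (n - l) < m)%N by move: (ltn_ord i'); move: (nat_of_ord i') => x; rewrite /q; nlia.
    have hj : (n - l + j' < n)%N by have := ltn_ord j'; nlia.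
    rewrite (mxgetE _ hi hj) mxE /=.
    by have -> : (i' + (n - l) < l)%N = false by nfalse.
  - rewrite block_mxEdr /ri /ci /=.
    have -> : (l + i' < l)%N = false by nfalse.
    have -> : (l + j' < l)%N = false by nfalse.
    rewrite !addKn.
    have hi : (i' + (n - l) < m)%N by move: (ltn_ord i'); move: (nat_of_ord i') => x; rewrite /q; nlia.
    have hj : (j' + (n - l) < n)%N by move: (ltn_ord j'); move: (nat_of_ord j') => x; rewrite /q; nlia.
    rewrite mxget_row_mxl // (mxgetE _ hi hj) !mxE.
    rewrite big1 ?subr0; last first.
      move=> t _; have ht : (t < n)%N by apply: leq_trans (ltn_ord t) _; nlia.
      rewrite mul_selR /= (mxgetE _ hi ht) mxE /=.
      have -> : (i' + (n - l) < n - l)%N = false by nfalse.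
      have -> : (n - l <= t)%N = false by rewrite leqNgt ltn_ord.
      by rewrite andFb mul0r.
    have -> : (i' + (n - l) < n - l)%N = false by nfalse.
    have -> : (n - l <= j' + (n - l))%N by rewrite leq_addl.
    have -> : (j' + (n - l) < m)%N by move: (ltn_ord j'); move: (nat_of_ord j') => x; rewrite /q; nlia.
    by rewrite /= !addnK mxget_ord.
have rSub : \rank Sub = (l + q)%N.
  apply: mxrank_unit; rewrite unitmxE /Sub det_ublock unitrM -!unitmxE uY.
  exact: u22.
have : (l + q <= \rank N)%N.
  rewrite -rSub hSub; apply: leq_trans (mxrankM_maxl _ _) _; exact: mxrankM_maxr.
move=> hN; have := leq_trans (leq_add hN (leqnn (n - l))) hY.
rewrite /q; move=> hh; apply: leq_trans hh; nlia.
Qed.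

Lemma split_lshift m n (i : 'I_m) : split (lshift n i) = inl i.
Proof. exact: (unsplitK (inl _ i)). Qed.
Lemma split_rshift m n (i : 'I_n) : split (rshift m i) = inr i.
Proof. exact: (unsplitK (inr _ i)). Qed.

Lemma sum_delta_row m n (M : 'M[F]_(m,n)) : \sum_i delta_mx i 0 *m row i M = M.
Proof.
rewrite -{2}(mul1mx M) mulmx_colrow; apply: eq_bigr => i _; by rewrite col1.
Qed.

Lemma sum_delta_row_lt m n l (hlm : (l <= m)%N) (M : 'M[F]_(m,n)) :
  (forall (i : 'I_m) j, (l <= i)%N -> M i j = 0) ->
  \sum_(j < l) delta_mx (widen_ord hlm j) 0 *m row (widen_ord hlm j) M = M.
Proof.
move=> h0; apply/matrixP => r c; rewrite summxE.
case: (ltnP r l) => hr.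
  rewrite (bigD1 (Ordinal hr)) //= big1 ?addr0.
    rewrite !mxE big_ord1 !mxE.
    have -> : widen_ord hlm (Ordinal hr) = r by apply: val_inj.
    by rewrite eqxx mul1r.
  move=> j /eqP hj; rewrite !mxE big_ord1 !mxE.
  case: eqP => [e|_]; last by rewrite mul0r.
  by case: hj; apply: val_inj => /=; rewrite e.
rewrite h0 // big1 // => j _; rewrite !mxE big_ord1 !mxE.
case: eqP => [e|_]; last by rewrite mul0r.
by move: (ltn_ord j); rewrite -[nat_of_ord j]/(nat_of_ord (widen_ord hlm j)) -e ltnNge hr.
Qed.

Lemma unit_row_nz p (X : 'M[F]_p) (i : 'I_p) : X \in unitmx -> exists j, X i j != 0.
Proof.
move=> u; apply/existsP; rewrite -negb_forall; apply/negP => /forallP h.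
have e : row i X = 0 by apply/rowP => j; rewrite !mxE; exact/eqP/h.
have := congr1 (fun M => M *m invmx X) e.
rewrite -row_mul mulmxV // mul0mx row1 => /matrixP /(_ 0 i); rewrite !mxE !eqxx /=.
by move/eqP; rewrite oner_eq0.
Qed.

Lemma row_nz m n (M : 'M[F]_(m,n)) i c : M i c != 0 -> row i M != 0.
Proof.
move=> h; apply/eqP => e; move: h.
have := congr1 (fun X : 'rV[F]_n => X 0 c) e.
by rewrite !mxE => ->; rewrite eqxx.
Qed.

Lemma delta_nz m (i : 'I_m) : (delta_mx i 0 : 'cV[F]_m) != 0.
Proof.
apply/eqP => /matrixP /(_ i 0); rewrite !mxE !eqxx /= => /eqP; by rewrite oner_eq0.
Qed.

Lemma upper_bound m n l (X11 : 'M[F]_(n - l)) (X12 : 'M[F]_(n - l, m + l - n))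
  (X22 : 'M[F]_(m + l - n)) (Y : 'M[F]_l) :
  (m <= n)%N -> (n <= m + l)%N -> (l + l <= n)%N ->
  X11 \in unitmx -> X22 \in unitmx -> Y \in unitmx ->
  tensor_rank_le (matA X11 X12 X22) (matB m n Y) (m + l).
Proof.
move=> h1 h2 h3 u11 u22 uY.
set A := matA X11 X12 X22; set B := matB m n Y.
have hlm : (l <= m)%N by nlia.
pose a (k : 'I_(m + l)) : 'cV[F]_m := match split k with
  inl i => delta_mx i 0 | inr j => delta_mx (widen_ord hlm j) 0 end.
pose b (k : 'I_(m + l)) : 'cV[F]_n := match split k with
  inl i => (row i A)^T | inr j => (row (widen_ord hlm j) B)^T end.
pose al (k : 'I_(m + l)) : F := if split k is inl _ then 1 else 0.
pose be (k : 'I_(m + l)) : F := if split k is inl _ then 0 else 1.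
have rA : forall i : 'I_m, row i A != 0.
  move=> i; case: (ltnP i (n - l)) => hi.
    have [j hj] := unit_row_nz (Ordinal hi) u11.
    have hc : (j < n)%N by apply: leq_trans (ltn_ord j) _; nlia.
    apply: (@row_nz _ _ _ _ (Ordinal hc)).
    rewrite /A mxE /= hi ltn_ord (mxgetE _ hi (ltn_ord j)).
    by have -> : Ordinal (ltn_ord j) = j by apply: val_inj.
  have hi' : (i - (n - l) < m + l - n)%N by move: (ltn_ord i) hi; move: (nat_of_ord i) => x; nlia.
  have [j hj] := unit_row_nz (Ordinal hi') u22.
  have hc : (j + (n - l) < n)%N by move: (ltn_ord j); move: (nat_of_ord j) => x; nlia.
  apply: (@row_nz _ _ _ _ (Ordinal hc)).
  rewrite /A mxE /=.
  have -> : (i < n - l)%N = false by nfalse.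
  have -> : (n - l <= j + (n - l))%N by rewrite leq_addl.
  have -> : (j + (n - l) < m)%N by move: (ltn_ord j); move: (nat_of_ord j) => x; nlia.
  rewrite /= addnK (mxgetE _ hi' (ltn_ord j)).
  by have -> : Ordinal (ltn_ord j) = j by apply: val_inj.
have rB : forall j : 'I_l, row (widen_ord hlm j) B != 0.
  move=> j; have [t ht] := unit_row_nz j uY.
  have hc : (n - l + t < n)%N by move: (ltn_ord t); move: (nat_of_ord t) => x; nlia.
  apply: (@row_nz _ _ _ _ (Ordinal hc)).
  rewrite /B mxE /= ltn_ord leq_addr addKn mxget_ord //.
exists a, b, al, be; split; last split.
- move=> k; rewrite /a /b /al /be; case: (split k) => [i|j].
    by rewrite delta_nz trmx_eq0 rA oner_eq0.
  by rewrite delta_nz trmx_eq0 rB oner_eq0 orbT.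
- rewrite big_split_ord /= /a /b /al /be.
  under eq_bigr do rewrite split_lshift scale1r trmxK.
  under [X in _ + X]eq_bigr do rewrite split_rshift scale0r.
  by rewrite big1_eq addr0 sum_delta_row.
- rewrite big_split_ord /= /a /b /al /be.
  under eq_bigr do rewrite split_lshift scale0r.
  under [X in _ + X]eq_bigr do rewrite split_rshift scale1r trmxK.
  rewrite big1_eq add0r sum_delta_row_lt // => i j hi.
  rewrite /B mxE.
  by have -> : (i < l)%N = false by nfalse.
Qed.

Theorem thm7_gen : thm7_prop F.
Proof.
move=> m n l h1 h2 h3 h4 X11 X12 X22 Y u11 u22 uY.
have h2' : (n <= m + l)%N by rewrite -leq_subLR.
have h4' : (l + l <= n)%N by rewrite addnn -geq_half_double.
split; first exact: upper_bound.
move=> r [a [b [al [be [_ [hA hB]]]]]].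
exact: (lower_bound h1 h2' h4' u11 u22 uY hA hB).
Qed.
End Gen.

Theorem mainTheorem7 :
  (forall R : rcfType, thm7_prop R) /\ (forall C : numClosedFieldType, thm7_prop C).
Proof. by split => F; apply: thm7_gen. Qed.
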